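(* Let $\mathbf{S}$ be a symmetric positive definite $p\times p$ matrix, $\mathbf{S}\ne\mathbf{I}$, with eigenvalues $\omega_1\ge\cdots\ge\omega_p>0$, and let $f(\mathbf{\Theta})=-\ln\det\mathbf{\Theta}+\operatorname{tr}(\mathbf{S}\mathbf{\Theta})$ on symmetric positive definite matrices. For each $i$, let $r_i=\sum_{l=1}^p\omega_l-\sum_{j\ne i}(\ln\omega_{p-j+1}+1)$. Then $r_i>\ln\omega_{p-i+1}+1$, so the equation $-\ln\lambda+\lambda\omega_{p-i+1}=r_i$ has exactly two positive roots $\lambda_{i\min}<\lambda_{i\max}$. If $\mathbf{\Theta}$ is symmetric positive definite with eigenvalues $\lambda_1\ge\cdots\ge\lambda_p$ and $\lambda_i\notin[\lambda_{i\min},\lambda_{i\max}]$ for some $i$, then $f(\mathbf{\Theta})>f(\mathbf{I})=\operatorname{tr}(\mathbf{S})$. Consequently, if $\mathcal{C}$ is any set of symmetric positive definite matrices containing $\mathbf{I}$ and $\mathbf{\Theta}$ minimizes $f$ over $\mathcal{C}$, then $\lambda_i\in[\lambda_{i\min},\lambda_{i\max}]$ for all $i$ and $$\|\nabla f(\mathbf{\Theta})\|_F=\|\mathbf{S}-\mathbf{\Theta}^{-1}\|_F\le\sqrt{\sum_{i=1}^p\lambda_{i\min}^{-2}}+\|\mathbf{S}\|_F.$$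
   Context: $\|\cdot\|_F$ is the Frobenius norm. *)

(* Defs.v *)
From HB Require Import structures.
From Stdlib Require Import Reals ClassicalEpsilon FunctionalExtensionality.
From mathcomp Require Import all_boot all_algebra.

Set Implicit Arguments.
Unset Strict Implicit.
Unset Printing Implicit Defensive.

Definition Req_bool (x y : R) : bool := if Req_EM_T x y then true else false.

Lemma Req_boolP : Equality.axiom Req_bool.
Proof. by move=> x y; rewrite /Req_bool; case: Req_EM_T => H; constructor. Qed.

HB.instance Definition _ := hasDecEq.Build R Req_boolP.

Definition R_find (P : pred R) (_ : nat) : option R :=
  match excluded_middle_informative (exists x, P x) with
  | left H => Some (proj1_sig (constructive_indefinite_description _ H))
  | right _ => None
  end.

Lemma R_find_correct P n x : R_find P n = Some x -> P x.
Proof.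
rewrite /R_find; case: excluded_middle_informative => // H [<-].
exact: (proj2_sig (constructive_indefinite_description _ H)).
Qed.

Lemma R_find_complete (P : pred R) : (exists x, P x) -> exists n, R_find P n.
Proof. by move=> H; exists 0%N; rewrite /R_find; case: excluded_middle_informative. Qed.

Lemma R_find_ext (P Q : pred R) : P =1 Q -> R_find P =1 R_find Q.
Proof. by move=> PQ; have -> : P = Q by apply: functional_extensionality. Qed.

HB.instance Definition _ :=
  hasChoice.Build R R_find_correct R_find_complete R_find_ext.

Lemma R_addA : associative Rplus.
Proof. by move=> x y z; rewrite Rplus_assoc. Qed.
Lemma R_mulA : associative Rmult.
Proof. by move=> x y z; rewrite Rmult_assoc. Qed.

HB.instance Definition _ :=
  GRing.isZmodule.Build R R_addA Rplus_comm Rplus_0_l Rplus_opp_l.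

Lemma R1_neq0 : R1 != R0.
Proof. by apply/eqP; exact: R1_neq_R0. Qed.

HB.instance Definition _ :=
  GRing.Zmodule_isComNzRing.Build R R_mulA Rmult_comm Rmult_1_l
    Rmult_plus_distr_r R1_neq0.

Lemma R_mulVf (x : R) : x != 0%R -> Rmult (Rinv x) x = R1.
Proof. by move/eqP=> Hx; exact: Rinv_l. Qed.

HB.instance Definition _ := GRing.ComNzRing_isField.Build R R_mulVf Rinv_0.

Local Open Scope ring_scope.

Definition sym_mx (p : nat) (A : 'M[R]_p) : Prop := A^T = A.

Definition posdef (p : nat) (A : 'M[R]_p) : Prop :=
  forall x : 'cV[R]_p, x <> 0 -> Rlt R0 ((x^T *m A *m x) ord0 ord0).

(* [lam] lists the eigenvalues of A, with algebraic multiplicity, in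
   nonincreasing order: lam 0 >= lam 1 >= ... >= lam (p-1)
   (0-based indices; the paper's lambda_i is lam (i-1)). *)
Definition sorted_eigenvalues (p : nat) (A : 'M[R]_p) (lam : 'I_p -> R) : Prop :=
  char_poly A = \prod_(i < p) ('X - (lam i)%:P) /\
  (forall i j : 'I_p, (i <= j)%N -> Rle (lam j) (lam i)).

Definition fobj (p : nat) (S Theta : 'M[R]_p) : R :=
  Rplus (Ropp (ln (\det Theta))) (\tr (S *m Theta)).

(* r_i = sum_l omega_l - sum_{j <> i} (ln omega_{p-j+1} + 1)   (paper, 1-based);
   0-based: omega_{p-j+1} is omega (rev_ord j). *)
Definition r_const (p : nat) (omega : 'I_p -> R) (i : 'I_p) : R :=
  Rminus (\sum_(l < p) omega l)
         (\sum_(j < p | j != i) Rplus (ln (omega (rev_ord j))) R1).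

Definition frob (m n : nat) (A : 'M[R]_(m, n)) : R :=
  sqrt (\sum_(i < m) \sum_(j < n) Rmult (A i j) (A i j)).

(* Main.v *)
Require Import Defs.
From HB Require Import structures.
From Stdlib Require Import Reals.
From mathcomp Require Import all_boot all_algebra.
From Stdlib Require Import Lra ClassicalEpsilon.

Section RealPart.
Local Open Scope R_scope.

Lemma ln_lt_sub1 t : 0 < t -> t <> 1 -> ln t < t - 1.
Proof.
move=> Ht Ht1. have H := exp_ineq1 (ln t) (ln_neq_0 t Ht1 Ht).
rewrite exp_ln in H; lra.
Qed.

Lemma ln_le_sub1 t : 0 < t -> ln t <= t - 1.
Proof.
move=> Ht. destruct (Req_dec t 1) as [->|H]. rewrite ln_1; lra.
left; exact: ln_lt_sub1.
Qed.

Definition gfun (c l : R) := - ln l + l * c.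

Lemma gfun_min c l : 0 < c -> 0 < l -> 1 + ln c <= gfun c l.
Proof.
move=> Hc Hl; rewrite /gfun.
have := ln_le_sub1 (l * c) (Rmult_lt_0_compat _ _ Hl Hc).
rewrite ln_mult //; lra.
Qed.

Lemma gfun_dec c x y : 0 < c -> 0 < x -> x < y -> y <= / c -> gfun c y < gfun c x.
Proof.
move=> Hc Hx Hxy Hy; rewrite /gfun.
have Hy0 : 0 < y by lra.
have H := ln_lt_sub1 (x / y) (Rdiv_lt_0_compat _ _ Hx Hy0).
have Hne : x / y <> 1.
  move=> E. have E2 : x = x / y * y by field; lra. rewrite E in E2. lra.
have {}H := H Hne.
rewrite /Rdiv ln_mult ?ln_Rinv in H; try apply Rinv_0_lt_compat; try lra.
have Hyc : y * c <= 1.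
  have := Rmult_le_compat_r c _ _ (Rlt_le _ _ Hc) Hy. rewrite Rinv_l; lra.
have : x / y - 1 = - ((y - x) / y) by field; lra.
rewrite /Rdiv => E; rewrite E in H.
have : (y - x) * / y >= (y - x) * c.
  apply Rle_ge. apply Rmult_le_compat_l; first lra.
  apply (Rmult_le_reg_l y); first lra. rewrite Rinv_r; lra.
nra.
Qed.

Lemma gfun_inc c x y : 0 < c -> / c <= x -> x < y -> gfun c x < gfun c y.
Proof.
move=> Hc Hx Hxy; rewrite /gfun.
have Hic : 0 < / c by apply Rinv_0_lt_compat.
have Hx0 : 0 < x by lra.
have H := ln_lt_sub1 (y / x) (Rdiv_lt_0_compat _ _ (Rlt_trans _ _ _ Hx0 Hxy) Hx0).
have Hne : y / x <> 1.
  move=> E. have E2 : y = y / x * x by field; lra. rewrite E in E2. lra.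
have {}H := H Hne.
rewrite /Rdiv ln_mult ?ln_Rinv in H; try apply Rinv_0_lt_compat; try lra.
have Hxc : 1 <= x * c.
  have := Rmult_le_compat_r c _ _ (Rlt_le _ _ Hc) Hx. rewrite Rinv_l; lra.
have E : y * / x - 1 = (y - x) * / x by field; lra.
rewrite E in H.
have : (y - x) * / x <= (y - x) * c.
  apply Rmult_le_compat_l; first lra.
  apply (Rmult_le_reg_l x); first lra. rewrite Rinv_r; lra.
nra.
Qed.

Lemma gfun_cont c a : 0 < a -> continuity_pt (gfun c) a.
Proof.
move=> Ha. rewrite /gfun.
apply continuity_pt_plus.
  apply continuity_pt_opp. apply derivable_continuous_pt.
  exists (/ a). exact: derivable_pt_lim_ln.
apply continuity_pt_mult. apply derivable_continuous_pt, derivable_pt_id.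
apply continuity_pt_const. by move=> ??.
Qed.

Lemma gfun_two_roots c r : 0 < c -> 1 + ln c < r ->
  exists lmin lmax, 0 < lmin /\ lmin < / c /\ / c < lmax /\
    gfun c lmin = r /\ gfun c lmax = r.
Proof.
move=> Hc Hr.
have Hic : 0 < / c by apply Rinv_0_lt_compat.
have gic : gfun c (/ c) = 1 + ln c.
  rewrite /gfun ln_Rinv // Rinv_l; lra.
pose M := Rabs r + Rabs (ln c) + 1.
pose x0 := exp (- M).
have Hx0 : 0 < x0 by apply exp_pos.
have Hx0c : x0 < / c.
  rewrite /x0 -(exp_ln (/ c)) //. apply exp_increasing.
  rewrite ln_Rinv // /M. have := Rle_abs (ln c).
  have := Rabs_pos r; lra.
have gx0 : r < gfun c x0.
  have h : ln x0 = - M by rewrite /x0 ln_exp.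
  rewrite /gfun h. have := Rmult_lt_0_compat _ _ Hx0 Hc.
  have := Rle_abs r. have := Rabs_pos (ln c). rewrite /M. lra.
pose K := Rabs r + Rabs (ln (2 / c)) + 2.
pose x1 := 2 / c * K.
have HK : 1 <= K by rewrite /K; have := Rabs_pos r; have := Rabs_pos (ln (2/c)); lra.
have H2c : 0 < 2 / c by apply Rdiv_lt_0_compat; lra.
have Hx1c : / c < x1.
  rewrite /x1 /Rdiv. have : 2 * / c * K >= 2 * / c by nra. lra.
have gx1 : r < gfun c x1.
  rewrite /gfun.
  have Hpos : 0 < x1 * c / 2.
    apply Rdiv_lt_0_compat; try lra. apply Rmult_lt_0_compat; lra.
  have Hl := ln_le_sub1 _ Hpos.
  have E : x1 = (x1 * c / 2) * (2 / c) by field; lra.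
  have Lx1 : ln x1 = ln (x1 * c / 2) + ln (2 / c) by rewrite {1}E ln_mult.
  rewrite Lx1.
  have E2 : x1 * c / 2 = K by rewrite /x1; field; lra.
  rewrite E2 in Hl.
  have E3 : x1 * c = 2 * K by rewrite /x1; field; lra.
  rewrite E2 E3. have HKd : K = Rabs r + Rabs (ln (2 / c)) + 2 by [].
  have := Rle_abs r. have := Rle_abs (ln (2/c)). lra.
have [lmin [[H1 H2] H3]] : {z | (x0 <= z <= / c) /\ (fun l => r - gfun c l) z = 0}.
  apply Ranalysis5.IVT_interv; try lra.
  move=> a Ha. apply continuity_pt_minus. apply continuity_pt_const; by move=> ??.
  apply gfun_cont; lra.
have [lmax [[H4 H5] H6]] : {z | (/ c <= z <= x1) /\ (fun l => gfun c l - r) z = 0}.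
  apply Ranalysis5.IVT_interv; try lra.
  move=> a Ha. apply continuity_pt_minus. apply gfun_cont; lra.
  apply continuity_pt_const; by move=> ??.
simpl in H3, H6.
exists lmin, lmax; split; [lra|split; [|split]].
- destruct H2 as [H2|H2]; first done. subst lmin. lra.
- destruct H4 as [H4|H4]; first done. subst lmax. lra.
- lra.
Qed.

Lemma gfun_roots_char c r lmin lmax : 0 < c -> 0 < lmin -> lmin < / c -> / c < lmax ->
  gfun c lmin = r -> gfun c lmax = r ->
  (forall l, 0 < l -> (gfun c l = r <-> l = lmin \/ l = lmax)) /\
  (forall l, 0 < l -> l < lmin \/ lmax < l -> r < gfun c l).
Proof.
move=> Hc H0 H1 H2 E1 E2; split.
- move=> l Hl; split; last by case=> ->.
  move=> El.
  destruct (Rle_or_lt l (/ c)) as [Hlc|Hlc].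
  + left. destruct (Rtotal_order l lmin) as [h|[h|h]]; first last; [|done|].
    * have := gfun_dec c lmin l Hc H0 h Hlc. lra.
    * have := gfun_dec c l lmin Hc Hl h (Rlt_le _ _ H1). lra.
  + right. destruct (Rtotal_order l lmax) as [h|[h|h]]; first last; [|done|].
    * have := gfun_inc c lmax l Hc (Rlt_le _ _ H2) h. lra.
    * have := gfun_inc c l lmax Hc (Rlt_le _ _ Hlc) h. lra.
- move=> l Hl [h|h].
  + have := gfun_dec c l lmin Hc Hl h (Rlt_le _ _ H1). lra.
  + have := gfun_inc c lmax l Hc (Rlt_le _ _ H2) h. lra.
Qed.

End RealPart.

From mathcomp Require Import ring zify.

Set Implicit Arguments.
Unset Strict Implicit.
Unset Printing Implicit Defensive.
Import GRing.Theory.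

Section Helpers.
Local Open Scope ring_scope.

Lemma refl_sq n (W : 'M[R]_n) (c : R) : c != 0 -> W *m W = (2 * c) *: W ->
  (1%:M - c^-1 *: W) *m (1%:M - c^-1 *: W) = 1%:M.
Proof.
move=> c0 WW.
rewrite mulmxBl !mulmxBr mul1mx mulmx1 -!scalemxAl -!scalemxAr mul1mx WW !scalerA.
have -> : c^-1 / c * (2 * c) = 2 * c^-1 by field.
apply/matrixP => i j; rewrite !mxE. ring.
Qed.

Lemma househ n (u : 'rV[R]_n.+1) : u *m u^T = 1%:M -> u 0 0 != 1 ->
  exists H : 'M[R]_n.+1, H^T = H /\ H *m H = 1%:M /\ delta_mx 0 0 *m H = u.
Proof.
move=> uu u0.
set e := delta_mx 0 0 : 'rV[R]_n.+1.
set w := u - e.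
set c := 1 - u 0 0.
have c0 : c != 0 by rewrite subr_eq0 eq_sym.
have ee : e *m e^T = 1%:M.
  apply/matrixP => i j; rewrite !ord1 !mxE (bigD1 0) //= big1 ?addr0.
    by rewrite !mxE !eqxx mulr1.
  by move=> k /negPf k0; rewrite !mxE k0 andbF mul0r.
have ue : u *m e^T = (u 0 0)%:M.
  apply/matrixP => i j; rewrite !ord1 !mxE (bigD1 0) //= big1 ?addr0.
    by rewrite !mxE !eqxx mulr1.
  by move=> k /negPf k0; rewrite !mxE k0 andbF mulr0.
have eu : e *m u^T = (u 0 0)%:M by rewrite -[e *m _]trmxK trmx_mul trmxK ue tr_scalar_mx.
have ww : w *m w^T = (2 * c)%:M.
  rewrite /w linearB /= mulmxBl !mulmxBr uu ue eu ee.
  apply/matrixP => i j; rewrite !ord1 !mxE /c. ring.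
exists (1%:M - c^-1 *: (w^T *m w)).
split; [|split].
- by rewrite linearB /= linearZ /= trmx_mul trmxK trmx1.
- have WW : (w^T *m w) *m (w^T *m w) = (2 * c) *: (w^T *m w).
    by rewrite mulmxA -(mulmxA w^T) ww mul_mx_scalar -scalemxAl.
  exact: (refl_sq c0 WW).
- rewrite mulmxBr mulmx1 -scalemxAr mulmxA.
  have -> : e *m w^T = (- c)%:M.
    rewrite /w linearB /= mulmxBr eu ee. apply/matrixP => i j; rewrite !ord1 !mxE /c. ring.
  rewrite mul_scalar_mx scalerA mulrN mulVf // scaleN1r opprK /w.
  by rewrite addrC subrK.
Qed.

Lemma RaddE (x y : R) : x + y = Rplus x y. Proof. by []. Qed.
Lemma RmulE (x y : R) : x * y = Rmult x y. Proof. by []. Qed.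
Lemma RoppE (x : R) : - x = Ropp x. Proof. by []. Qed.
Lemma RinvE (x : R) : x^-1 = Rinv x. Proof. by []. Qed.
Lemma R0E : (0 : R) = R0. Proof. by []. Qed.
Lemma R1E : (1 : R) = R1. Proof. by []. Qed.
Definition RE := (RaddE, RmulE, RoppE, RinvE, R0E, R1E).

Lemma sum_ge0 (I : finType) (P : pred I) (F : I -> R) :
  (forall i, P i -> Rle R0 (F i)) -> Rle R0 (\sum_(i | P i) F i).
Proof.
move=> H; apply: (big_ind (fun x => Rle R0 x)) => //; first by right.
by move=> x y hx hy; rewrite RaddE; lra.
Qed.

Lemma sum_le (I : finType) (P : pred I) (F G : I -> R) :
  (forall i, P i -> Rle (F i) (G i)) -> Rle (\sum_(i | P i) F i) (\sum_(i | P i) G i).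
Proof.
move=> H; apply: (big_ind2 (fun x y => Rle x y)) => //; first by right.
by move=> x1 x2 y1 y2 h1 h2; rewrite !RaddE; lra.
Qed.

Lemma sumsq_ge0 (I : finType) (F : I -> R) : Rle R0 (\sum_i F i * F i).
Proof. by apply: sum_ge0 => i _; rewrite RmulE; nra. Qed.

Lemma sumsq_eq0 (I : finType) (F : I -> R) : \sum_i F i * F i = 0 -> forall i, F i = 0.
Proof.
move=> H i; move: H; rewrite (bigD1 i) //= => H.
have H' : Rplus (Rmult (F i) (F i)) (\sum_(j | j != i) F j * F j) = R0 := H.
have := sum_ge0 (P := fun j => j != i) (F := fun j => F j * F j).
move=> /(_ (fun j _ => ltac:(rewrite RmulE; nra))) => h.
change (F i = R0). simpl in h. move: h H'; set s := (\sum_(j | _) _) => h H'. have := Rle_0_sqr (F i); rewrite /Rsqr. nra.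
Qed.

Lemma unit_eigvec n (A : 'M[R]_n.+1) a (v : 'rV_n.+1) : v *m A = a *: v -> v != 0 ->
  exists u : 'rV_n.+1, [/\ u *m A = a *: u, u *m u^T = 1%:M & u 0 0 != 1].
Proof.
move=> Hv v0.
pose s := \sum_j v 0 j * v 0 j.
have vv : v *m v^T = s%:M.
  by apply/matrixP => i j; rewrite !ord1 !mxE; apply: eq_bigr => k _; rewrite !mxE.
have s0 : s <> R0.
  move=> E; move/eqP: v0; apply; apply/matrixP => i j; rewrite ord1 mxE.
  exact: (sumsq_eq0 E).
have sp : Rlt R0 s.
  have := sumsq_ge0 (fun j => v 0 j); rewrite -/s; lra.
pose k := Rinv (sqrt s).
have kk : k * k * s = 1.
  have hs := sqrt_sqrt s (Rlt_le _ _ sp).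
  have hs0 : sqrt s <> R0 by have := sqrt_lt_R0 s sp; lra.
  have hs' : sqrt s * sqrt s = s := hs.
  have hs0' : sqrt s != 0 by apply/eqP.
  rewrite /k -RinvE -{3}hs'; field; exact: hs0'.
pose u0 := k *: v.
have u0A : u0 *m A = a *: u0 by rewrite /u0 -scalemxAl Hv !scalerA mulrC.
have u0u0 : u0 *m u0^T = 1%:M.
  rewrite /u0 linearZ /= -scalemxAl -scalemxAr vv scalerA.
  by apply/matrixP => i j; rewrite !ord1 !mxE eqxx mulr1n kk.
case: (eqVneq (u0 0 0) 1) => h.
- exists (- u0); split.
  + by rewrite mulNmx u0A scalerN.
  + by rewrite linearN /= mulNmx mulmxN opprK.
  + rewrite mxE h. apply/eqP => E.
    have E' : Ropp R1 = R1 := E. lra.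
- by exists u0.
Qed.

Lemma char_poly_conj n (A H : 'M[R]_n) : H *m H = 1%:M -> char_poly (H *m A *m H) = char_poly A.
Proof.
move=> HH.
pose H' := map_mx polyC H.
have HH' : H' *m H' = 1%:M by rewrite -map_mxM HH map_mx1.
have E : char_poly_mx (H *m A *m H) = H' *m char_poly_mx A *m H'.
  rewrite /char_poly_mx !map_mxM -/H' mulmxBr mulmxBl.
  by rewrite scalar_mxC -mulmxA; congr (_ - _); rewrite -mulmxA HH' mulmx1.
rewrite /char_poly E !det_mulmx mulrC mulrA -det_mulmx HH' det1 mul1r.
by [].
Qed.

Lemma lshift00 n : lshift n (0 : 'I_1) = 0 :> 'I_(1 + n).
Proof. exact: val_inj. Qed.

Lemma spectral n (A : 'M[R]_n) (lam : 'I_n -> R) : A^T = A ->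
  char_poly A = \prod_(i < n) ('X - (lam i)%:P) ->
  exists U : 'M[R]_n, U^T *m U = 1%:M /\ A = U *m diag_mx (\row_i lam i) *m U^T.
Proof.
elim: n A lam => [|n IH] A lam AT cA.
  exists 1%:M; split; first by rewrite trmx1 mulmx1.
  by apply/matrixP => -[].
have : eigenvalue A (lam 0).
  by rewrite eigenvalue_root_char cA big_ord_recl rootM root_XsubC eqxx.
case/eigenvalueP => v Hv v0.
have [u [uA uu u0]] := unit_eigvec Hv v0.
have [H [HT [HH eH]]] := househ uu u0.
pose B : 'M[R]_(1 + n) := H *m A *m H.
have Bdef : B = H *m A *m H by [].
clearbody B.
have BT : B^T = B by rewrite Bdef !trmx_mul HT AT mulmxA.
have rowB : row 0 B = lam 0 *: delta_mx 0 0.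
  by rewrite rowE Bdef !mulmxA eH uA -scalemxAl -eH -mulmxA HH mulmx1.
have Bij : forall j, B 0 j = lam 0 * (delta_mx 0 0 : 'rV[R]_(1+n)) 0 j.
  by move=> j; have := congr1 (fun M : 'M[R]_(1, 1 + n) => M 0 j) rowB; rewrite !mxE.
have BTij : forall i j, B i j = B j i.
  by move=> i j; rewrite -{1}BT mxE.
pose D := drsubmx B.
have Bblk : B = block_mx (lam 0)%:M 0 0 D.
  rewrite -[B]submxK; congr block_mx.
  - apply/matrixP => i j; rewrite !ord1 !mxE lshift00 Bij !mxE eqxx /=.
    by rewrite mulr1.
  - apply/matrixP => i j; rewrite !ord1 !mxE lshift00 Bij !mxE /=.
    by rewrite mulr0.
  - apply/matrixP => i j; rewrite !ord1 !mxE lshift00 BTij Bij !mxE /=.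
    by rewrite mulr0.
have cB : char_poly B = char_poly A by rewrite Bdef char_poly_conj.
have cD : char_poly D = \prod_(i < n) ('X - (lam (lift 0 i))%:P).
  apply: (@mulfI _ ('X - (lam 0)%:P)); first by rewrite polyXsubC_eq0.
  rewrite -(big_ord_recl n (fun i => 'X - (lam i)%:P)) -cA -cB Bblk.
  rewrite /char_poly char_block_diag_mx det_ublock det_mx11 !mxE eqxx /=.
  by rewrite mulr1n.
have DT : D^T = D by apply/matrixP => i j; rewrite !mxE BTij.
have [U' [U'U DE]] := IH D (fun i => lam (lift 0 i)) DT cD.
exists (H *m block_mx (1%:M : 'M_1) 0 0 U').
have rowlam : \row_i lam i = row_mx (\row_(j < 1) lam 0) (\row_(j < n) lam (lift 0 j)) :> 'rV_(1 + n).
  apply/matrixP => i j; rewrite !mxE; case: splitP => k Hk; rewrite !mxE.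
  - by congr lam; apply: val_inj; rewrite /= Hk ord1.
  - by congr lam; apply: val_inj; rewrite /= Hk.
split.
  rewrite trmx_mul (@tr_block_mx _ 1 n 1 n) !trmx0 trmx1 HT -mulmxA (mulmxA H H) HH mul1mx.
  rewrite (@mulmx_block _ 1 n 1 n 1 n) !mulmx0 !mul0mx !addr0 !add0r mulmx1 U'U.
  by rewrite -scalar_mx_block.
have AE : A = H *m B *m H by rewrite Bdef !mulmxA HH mul1mx -mulmxA HH mulmx1.
rewrite [LHS]AE Bblk DE rowlam (@diag_mx_row _ n 1).
rewrite trmx_mul HT (@tr_block_mx _ 1 n 1 n) !trmx0 trmx1 !mulmxA.
congr (_ *m _). rewrite -!mulmxA; congr (_ *m _).
rewrite !(@mulmx_block _ 1 n 1 n 1 n) !mulmx0 !mul0mx !addr0 !add0r !mulmx1 !mul1mx !mulmxA.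
have -> : diag_mx (\row_(_ < 1) lam 0) = (lam 0)%:M :> 'M_1.
  by apply/matrixP => i j; rewrite !ord1 !mxE eqxx mulr1n.
by rewrite mulmx0.
Qed.

Definition bext n (b : 'I_n -> R) (k : nat) : R :=
  if @insub nat (fun k => (k < n)%N) 'I_n k is Some i then b i else 0.

Lemma bextE n (b : 'I_n -> R) (i : 'I_n) : bext b i = b i.
Proof. by rewrite /bext valK. Qed.

Lemma bext_out n (b : 'I_n -> R) (k : nat) : (n <= k)%N -> bext b k = 0.
Proof. by move=> h; rewrite /bext insubF // ltnNge h. Qed.

Definition dlt n (b : 'I_n -> R) (t : 'I_n) := bext b t - bext b t.+1.

Lemma dlt_sum n (b : 'I_n -> R) (j : 'I_n) : \sum_(t < n | (j <= t)%N) dlt b t = b j.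
Proof.
have -> : \sum_(t < n | (j <= t)%N) dlt b t = \sum_(j <= t < n) (bext b t - bext b t.+1).
  by rewrite big_geq_mkord.
have -> : \sum_(j <= t < n) (bext b t - bext b t.+1) = - \sum_(j <= t < n) (bext b t.+1 - bext b t).
  by rewrite -sumrN; apply: eq_bigr => k _; rewrite opprB.
by rewrite telescope_sumr ?(ltnW (ltn_ord j)) // (bext_out b (leqnn n)) bextE sub0r opprK.
Qed.

Lemma abel n (b c : 'I_n -> R) :
  \sum_j b j * c j = \sum_t dlt b t * \sum_(j : 'I_n | (j <= t)%N) c j.
Proof.
symmetry.
transitivity (\sum_(t : 'I_n) \sum_(j : 'I_n) (if (j <= t)%N then dlt b t * c j else 0)).
  apply: eq_bigr => t _; rewrite mulr_sumr big_mkcond /=; apply: eq_bigr => j _.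
  by case: ifP.
rewrite exchange_big /=; apply: eq_bigr => j _.
rewrite -big_mkcond /= -(dlt_sum b j) mulr_suml.
by apply: eq_bigr.
Qed.

Lemma thresh n (a w : 'I_n -> R) (t : 'I_n) :
  (forall i j : 'I_n, (i <= j)%N -> Rle (a j) (a i)) ->
  (forall k, Rle R0 (w k) /\ Rle (w k) R1) ->
  \sum_k w k = \sum_(j : 'I_n | (j <= t)%N) 1 ->
  Rle (\sum_(j : 'I_n | (j <= t)%N) a (rev_ord j)) (\sum_k a k * w k).
Proof.
move=> adec w01 wsum.
pose L := fun k : 'I_n => (rev_ord k <= t)%N.
have E1 : \sum_(j : 'I_n | (j <= t)%N) a (rev_ord j) = \sum_k (if L k then a k else 0).
  rewrite -big_mkcond /= (reindex_inj rev_ord_inj) /=.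
  by apply: eq_big => k; rewrite /L ?rev_ordK.
have E2 : \sum_(j : 'I_n | (j <= t)%N) (1 : R) = \sum_k (if L k then 1 else 0).
  rewrite -big_mkcond /= (reindex_inj rev_ord_inj) /=.
  by apply: eq_big => k; rewrite /L ?rev_ordK.
pose a0 := a (rev_ord t).
have key : forall k, Rle (a0 * (w k - (if L k then 1 else 0)))
                        (a k * w k - (if L k then a k else 0)).
  move=> k; have [w0 w1] := w01 k; rewrite /L /a0; case: ifP => Hk.
  - have : (rev_ord t <= k)%N by move: Hk; rewrite /= => Hk; lia.
    move/adec => h. change (Rle (Rmult (a (rev_ord t)) (Rplus (w k) (Ropp R1))) (Rplus (Rmult (a k) (w k)) (Ropp (a k)))).
    nra.
  - have : (k <= rev_ord t)%N by move: Hk; rewrite /= => Hk; lia.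
    move/adec => h. change (Rle (Rmult (a (rev_ord t)) (Rplus (w k) (Ropp R0))) (Rplus (Rmult (a k) (w k)) (Ropp R0))).
    nra.
have S1 := sum_le (P := predT) (fun k _ => key k).
rewrite -mulr_sumr sumrB -E2 -wsum subrr mulr0 sumrB -E1 in S1.
move: S1; set X := \sum_k a k * w k; set Y := \sum_(j | _) _.
change (Rle R0 (Rplus X (Ropp Y)) -> Rle Y X). lra.
Qed.

Lemma sum_sub_le n (P : pred 'I_n) (F : 'I_n -> R) : (forall i, Rle R0 (F i)) ->
  Rle (\sum_(i | P i) F i) (\sum_i F i).
Proof.
move=> H; rewrite big_mkcond /=; apply: sum_le => i _; case: ifP => _; first by right.
exact: H.
Qed.

Lemma dlt_ge0 n (b : 'I_n -> R) (t : 'I_n) :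
  (forall i j : 'I_n, (i <= j)%N -> Rle (b j) (b i)) -> (forall i, Rle R0 (b i)) ->
  Rle R0 (dlt b t).
Proof.
move=> bdec bpos; rewrite /dlt bextE /bext; case: insubP => [i _ Hi|_].
- have : (t <= i)%N by rewrite Hi.
  move/bdec => h. change (Rle R0 (Rplus (b t) (Ropp (b i)))). lra.
- have := bpos t. change (Rle R0 (b t) -> Rle R0 (Rplus (b t) (Ropp R0))). lra.
Qed.

Lemma vN n (a b : 'I_n -> R) (m : 'I_n -> 'I_n -> R) :
  (forall i j : 'I_n, (i <= j)%N -> Rle (a j) (a i)) ->
  (forall i j : 'I_n, (i <= j)%N -> Rle (b j) (b i)) ->
  (forall i, Rle R0 (b i)) -> (forall k j, Rle R0 (m k j)) ->
  (forall k, \sum_j m k j = 1) -> (forall j, \sum_k m k j = 1) ->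
  Rle (\sum_j b j * a (rev_ord j)) (\sum_k \sum_j a k * b j * m k j).
Proof.
move=> adec bdec bpos mpos mrow mcol.
have -> : \sum_k \sum_j a k * b j * m k j = \sum_j b j * \sum_k a k * m k j.
  rewrite exchange_big /=; apply: eq_bigr => j _; rewrite mulr_sumr.
  by apply: eq_bigr => k _; rewrite mulrCA mulrA.
rewrite (abel b (fun j => a (rev_ord j))) (abel b (fun j => \sum_k a k * m k j)).
apply: sum_le => t _.
have dpos := dlt_ge0 t bdec bpos.
pose w := fun k => \sum_(j : 'I_n | (j <= t)%N) m k j.
have -> : \sum_(j : 'I_n | (j <= t)%N) \sum_k a k * m k j = \sum_k a k * w k.
  rewrite exchange_big /=; apply: eq_bigr => k _; by rewrite mulr_sumr.
have w01 : forall k, Rle R0 (w k) /\ Rle (w k) R1.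
  move=> k; split; first exact: sum_ge0 (fun j _ => mpos k j).
  have := sum_sub_le (fun j => (j <= t)%N) (mpos k). rewrite mrow. by [].
have wsum : \sum_k w k = \sum_(j : 'I_n | (j <= t)%N) 1.
  rewrite /w exchange_big /=; apply: eq_bigr => j _; exact: mcol.
have h := @thresh n a w t adec w01 wsum.
move: h; set X := \sum_(j | _) _; set Y := \sum_k _ => h.
change (Rle (Rmult (dlt b t) X) (Rmult (dlt b t) Y)).
by apply: Rmult_le_compat_l.
Qed.

Lemma UU' n (U : 'M[R]_n) (UU : U^T *m U = 1%:M) : U *m U^T = 1%:M.
Proof. exact: mulmx1C UU. Qed.

Lemma UUl n (U : 'M[R]_n) (UU : U^T *m U = 1%:M) m (X : 'M[R]_(m, n)) : X *m U^T *m U = X.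
Proof. by rewrite -mulmxA UU mulmx1. Qed.

Lemma spec_quad n (U : 'M[R]_n) (lam : 'I_n -> R) (UU : U^T *m U = 1%:M) (i : 'I_n) :
  let x := U *m (delta_mx i 0 : 'cV[R]_n) in
  (x^T *m (U *m diag_mx (\row_i lam i) *m U^T) *m x) 0 0 = lam i.
Proof.
move=> x; rewrite /x trmx_mul trmx_delta !mulmxA !(UUl UU).
rewrite -rowE -colE !mxE eqxx mulr1n.
by [].
Qed.

Lemma spec_xnz n (U : 'M[R]_n) (UU : U^T *m U = 1%:M) (i : 'I_n) :
  U *m (delta_mx i 0 : 'cV[R]_n) <> 0.
Proof.
move=> E; have := congr1 (mulmx U^T) E; rewrite mulmxA UU mul1mx mulmx0.
move/matrixP/(_ i 0); rewrite !mxE !eqxx /= => /eqP; by rewrite oner_eq0.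
Qed.

Lemma spec_pos n (U : 'M[R]_n) (lam : 'I_n -> R) (UU : U^T *m U = 1%:M) :
  posdef (U *m diag_mx (\row_i lam i) *m U^T) -> forall i, Rlt R0 (lam i).
Proof.
move=> P i; have := P _ (@spec_xnz n U UU i); by rewrite (spec_quad lam UU).
Qed.

Lemma spec_det n (U : 'M[R]_n) (lam : 'I_n -> R) (UU : U^T *m U = 1%:M) :
  \det (U *m diag_mx (\row_i lam i) *m U^T) = \prod_i lam i.
Proof.
rewrite !det_mulmx det_diag mulrC mulrA -det_mulmx UU det1 mul1r.
by apply: eq_bigr => i _; rewrite mxE.
Qed.

Lemma spec_tr n (U : 'M[R]_n) (lam : 'I_n -> R) (UU : U^T *m U = 1%:M) :
  \tr (U *m diag_mx (\row_i lam i) *m U^T) = \sum_i lam i.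
Proof.
rewrite mxtrace_mulC mulmxA UU mul1mx mxtrace_diag.
by apply: eq_bigr => i _; rewrite mxE.
Qed.

Lemma tr_two n (V U : 'M[R]_n) (om lam : 'I_n -> R) :
  \tr ((V *m diag_mx (\row_i om i) *m V^T) *m (U *m diag_mx (\row_i lam i) *m U^T)) =
  \sum_k \sum_j om k * lam j * ((V^T *m U) k j * (V^T *m U) k j).
Proof.
rewrite !mulmxA mxtrace_mulC !mulmxA.
have -> : U^T *m V *m diag_mx (\row_i om i) *m V^T *m U *m diag_mx (\row_i lam i)
   = ((V^T *m U)^T *m diag_mx (\row_i om i)) *m ((V^T *m U) *m diag_mx (\row_i lam i)).
  by rewrite trmx_mul trmxK !mulmxA.
move: (V^T *m U) => W.
rewrite /mxtrace exchange_big; apply: eq_bigr => j _; rewrite mxE; apply: eq_bigr => k _.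
rewrite mul_mx_diag mul_mx_diag !mxE.
ring.
Qed.

Lemma orth_rows n (W : 'M[R]_n) : W *m W^T = 1%:M -> forall k, \sum_j W k j * W k j = 1.
Proof.
move=> E k; have := congr1 (fun M : 'M[R]_n => M k k) E; rewrite !mxE eqxx mulr1n => <-.
by apply: eq_bigr => j _; rewrite mxE.
Qed.

Lemma tr_ineq n (V U : 'M[R]_n) (om lam : 'I_n -> R) :
  V^T *m V = 1%:M -> U^T *m U = 1%:M ->
  (forall i j : 'I_n, (i <= j)%N -> Rle (om j) (om i)) ->
  (forall i j : 'I_n, (i <= j)%N -> Rle (lam j) (lam i)) ->
  (forall i, Rle R0 (lam i)) ->
  Rle (\sum_j lam j * om (rev_ord j))
      (\tr ((V *m diag_mx (\row_i om i) *m V^T) *m (U *m diag_mx (\row_i lam i) *m U^T))).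
Proof.
move=> VV UU odec ldec lpos; rewrite tr_two.
apply: vN => //.
- move=> k j; rewrite RmulE; nra.
- apply: orth_rows. rewrite trmx_mul trmxK mulmxA -(mulmxA V^T) (UU' UU) mulmx1 //.
- move=> j. rewrite -(orth_rows (W := (V^T *m U)^T) _ j).
    by apply: eq_bigr => k _; rewrite !mxE.
  rewrite trmxK trmx_mul trmxK !mulmxA -(mulmxA U^T) (UU' VV) mulmx1 //.
Qed.

Lemma sum_sq_expand (I : finType) (x y : I -> R) (p q : R) :
  \sum_i (p * x i + q * y i) * (p * x i + q * y i) =
  p * p * (\sum_i x i * x i) + 2 * p * q * (\sum_i x i * y i) + q * q * (\sum_i y i * y i).
Proof.
rewrite !mulr_sumr -!big_split /=; apply: eq_bigr => i _; ring.
Qed.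

Lemma minkowski (I : finType) (x y : I -> R) :
  Rle (sqrt (\sum_i (x i - y i) * (x i - y i)))
      (Rplus (sqrt (\sum_i x i * x i)) (sqrt (\sum_i y i * y i))).
Proof.
have E1 := sum_sq_expand x y 1 (-1).
have E2 := sum_sq_expand x y (sqrt (\sum_i y i * y i)) (sqrt (\sum_i x i * x i)).
have G2 := sumsq_ge0 (fun i => sqrt (\sum_i y i * y i) * x i + sqrt (\sum_i x i * x i) * y i).
have E0 : \sum_i (x i - y i) * (x i - y i) = \sum_i (1 * x i + -1 * y i) * (1 * x i + -1 * y i).
  by apply: eq_bigr => i _; rewrite mul1r mulN1r.
have Bx : \sum_i x i * x i = 0 -> \sum_i x i * y i = 0.
  move/sumsq_eq0 => h; rewrite big1 // => i _; by rewrite h mul0r.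
have By : \sum_i y i * y i = 0 -> \sum_i x i * y i = 0.
  move/sumsq_eq0 => h; rewrite big1 // => i _; by rewrite h mulr0.
rewrite E0 E1. rewrite E2 in G2. move: G2 Bx By.
have hA := sumsq_ge0 x. have hC := sumsq_ge0 y.
set A := \sum_i x i * x i; set B := \sum_i x i * y i; set C := \sum_i y i * y i.
move=> G2 Bx By.
have sA := sqrt_sqrt A hA. have sC := sqrt_sqrt C hC.
have pA := sqrt_pos A. have pC := sqrt_pos C.
set a := sqrt A in sA pA G2 *. set c := sqrt C in sC pC G2 *.
have G2' : Rle R0 (Rplus (Rplus (Rmult (Rmult c c) A) (Rmult (Rmult (Rmult 2 c) a) B)) (Rmult (Rmult a a) C)) := G2.
have HB : Rle (Ropp (Rmult a c)) B.
  destruct (Req_dec a R0) as [a0|a0].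
    have : A = 0 by rewrite -sA a0; exact: Rmult_0_l.
    move/Bx => ->; change (Rle (Ropp (Rmult a c)) R0). rewrite a0; lra.
  destruct (Req_dec c R0) as [c0|c0].
    have : C = 0 by rewrite -sC c0; exact: Rmult_0_l.
    move/By => ->; change (Rle (Ropp (Rmult a c)) R0). rewrite c0; lra.
  have acp : Rlt R0 (Rmult a c) by apply: Rmult_lt_0_compat; lra.
  rewrite -sA -sC in G2'.
  nra.
change (Rle (sqrt (Rplus (Rplus (Rmult (Rmult 1 1) A) (Rmult (Rmult (Rmult 2 1) (-1)) B)) (Rmult (Rmult (-1) (-1)) C))) (Rplus a c)).
rewrite -(sqrt_square (Rplus a c)); last lra.
apply: sqrt_le_1_alt. rewrite -sA -sC. nra.
Qed.

Lemma spec_inv n (U : 'M[R]_n) (lam : 'I_n -> R) : U^T *m U = 1%:M -> (forall i, lam i != 0) ->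
  invmx (U *m diag_mx (\row_i lam i) *m U^T) = U *m diag_mx (\row_i (lam i)^-1) *m U^T.
Proof.
move=> UU l0.
have MN : (U *m diag_mx (\row_i lam i) *m U^T) *m (U *m diag_mx (\row_i (lam i)^-1) *m U^T) = 1%:M.
  rewrite !mulmxA (UUl UU) -(mulmxA U) mul_mx_diag.
  have -> : \matrix_(i, j) (diag_mx (\row_i lam i) i j * (\row_i (lam i)^-1) 0 j) = 1%:M :> 'M_n.
    apply/matrixP => i j; rewrite !mxE; case: eqP => [->|]; rewrite ?mulr1n ?mulr0n ?mul0r //.
    by rewrite mulfV.
  by rewrite mulmx1 (UU' UU).
have [Mu _] := mulmx1_unit MN.
by rewrite -[invmx _]mulmx1 -MN mulKmx.
Qed.

Lemma frob_tr m n (A : 'M[R]_(m, n)) : \sum_i \sum_j A i j * A i j = \tr (A *m A^T).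
Proof.
rewrite /mxtrace; apply: eq_bigr => i _; rewrite mxE; apply: eq_bigr => j _; by rewrite mxE.
Qed.

Lemma frob_spec n (U : 'M[R]_n) (e : 'I_n -> R) : U^T *m U = 1%:M ->
  frob (U *m diag_mx (\row_i e i) *m U^T) = sqrt (\sum_i e i * e i).
Proof.
move=> UU; rewrite /frob frob_tr; congr sqrt.
rewrite !trmx_mul trmxK tr_diag_mx !mulmxA (UUl UU (U *m diag_mx (\row_i e i))) mxtrace_mulC !mulmxA UU mul1mx.
rewrite mul_mx_diag /mxtrace; apply: eq_bigr => i _; by rewrite !mxE eqxx mulr1n.
Qed.

Lemma frob_tri n (A B : 'M[R]_n) : Rle (frob (A - B)) (Rplus (frob A) (frob B)).
Proof.
rewrite /frob !pair_big /=.
have -> : \sum_(p : 'I_n * 'I_n) (A - B) p.1 p.2 * (A - B) p.1 p.2 =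
          \sum_(p : 'I_n * 'I_n) (A p.1 p.2 - B p.1 p.2) * (A p.1 p.2 - B p.1 p.2).
  by apply: eq_bigr => p _; rewrite !mxE.
exact: minkowski.
Qed.

Lemma ln_prod n (f : 'I_n -> R) : (forall i, Rlt R0 (f i)) ->
  Rlt R0 (\prod_i f i) /\ ln (\prod_i f i) = \sum_i ln (f i).
Proof.
move=> fp.
apply: (big_ind2 (fun p s => Rlt R0 p /\ ln p = s)).
- split; first exact: Rlt_0_1. exact: ln_1.
- move=> p1 s1 p2 s2 [h1 e1] [h2 e2]; split.
    exact: Rmult_lt_0_compat.
  by rewrite -e1 -e2; exact: ln_mult.
- by move=> i _; split.
Qed.

Lemma fobj_lower n (V U : 'M[R]_n) (om lam : 'I_n -> R) :
  V^T *m V = 1%:M -> U^T *m U = 1%:M ->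
  (forall i j : 'I_n, (i <= j)%N -> Rle (om j) (om i)) ->
  (forall i j : 'I_n, (i <= j)%N -> Rle (lam j) (lam i)) ->
  (forall i, Rlt R0 (lam i)) ->
  Rle (\sum_j gfun (om (rev_ord j)) (lam j))
      (fobj (V *m diag_mx (\row_i om i) *m V^T) (U *m diag_mx (\row_i lam i) *m U^T)).
Proof.
move=> VV UU odec ldec lpos.
have T := tr_ineq VV UU odec ldec (fun i => Rlt_le _ _ (lpos i)).
have [_ L] := ln_prod lpos.
rewrite /fobj (spec_det _ UU) L.
have -> : \sum_j gfun (om (rev_ord j)) (lam j) = - \sum_j ln (lam j) + \sum_j lam j * om (rev_ord j).
  by rewrite -sumrN -big_split; apply: eq_bigr.
move: T; set X := \tr _; set Y := \sum_j _ * _; set Z := \sum_j ln _.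
change (Rle Y X -> Rle (Rplus (Ropp Z) Y) (Rplus (Ropp Z) X)). lra.
Qed.


End Helpers.

Theorem mainTheorem17 (p : nat) (S : 'M[R]_p) (omega : 'I_p -> R) :
  sym_mx S -> posdef S -> S <> 1%:M%R -> sorted_eigenvalues S omega ->
  (forall i : 'I_p,
     Rlt (Rplus (ln (omega (rev_ord i))) R1) (r_const omega i)) /\
  exists lmin lmax : 'I_p -> R,
    (forall i : 'I_p,
       Rlt R0 (lmin i) /\ Rlt (lmin i) (lmax i) /\
       (forall l : R, Rlt R0 l ->
          (Rplus (Ropp (ln l)) (Rmult l (omega (rev_ord i))) = r_const omega i
           <-> l = lmin i \/ l = lmax i))) /\
    (forall (Theta : 'M[R]_p) (lam : 'I_p -> R),
       sym_mx Theta -> posdef Theta -> sorted_eigenvalues Theta lam ->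
       (exists i : 'I_p, Rlt (lam i) (lmin i) \/ Rlt (lmax i) (lam i)) ->
       Rgt (fobj S Theta) (fobj S 1%:M%R)) /\
    fobj S 1%:M%R = (\tr S)%R /\
    (forall (C : 'M[R]_p -> Prop) (Theta : 'M[R]_p) (lam : 'I_p -> R),
       (forall A, C A -> sym_mx A /\ posdef A) ->
       C 1%:M%R -> C Theta ->
       (forall A, C A -> Rle (fobj S Theta) (fobj S A)) ->
       sorted_eigenvalues Theta lam ->
       (forall i : 'I_p, Rle (lmin i) (lam i) /\ Rle (lam i) (lmax i)) /\
       Rle (frob (S - invmx Theta)%R)
           (Rplus (sqrt (\sum_(i < p) Rinv (Rmult (lmin i) (lmin i)))%R) (frob S))).
Proof.
move=> Ssym Spd SnI [cS odec].
have [V [VV SE]] := spectral Ssym cS.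
have opos : forall i, Rlt R0 (omega i).
  by apply: (spec_pos VV); rewrite -SE.
have trS : (\tr S = \sum_i omega i)%R by rewrite SE spec_tr.
pose Q := (\sum_l (omega l - (ln (omega l) + 1)))%R.
have rQ : forall i, r_const omega i = Rplus (Rplus (ln (omega (rev_ord i))) R1) Q.
  move=> i.
  have H1 : (\sum_j (ln (omega (rev_ord j)) + 1) = (ln (omega (rev_ord i)) + 1) +
             \sum_(j | j != i) (ln (omega (rev_ord j)) + 1))%R by rewrite (bigD1 i).
  have H2 : (\sum_j (ln (omega (rev_ord j)) + 1) = \sum_j (ln (omega j) + 1))%R.
    rewrite [LHS](reindex_inj rev_ord_inj) /=.
    by apply: eq_bigr => j _; rewrite rev_ordK.
  have HQ : (Q = \sum_l omega l - \sum_l (ln (omega l) + 1))%R by rewrite /Q sumrB.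
  change ((\sum_l omega l - \sum_(j | j != i) (ln (omega (rev_ord j)) + 1))%R
          = ((ln (omega (rev_ord i)) + 1) + Q)%R).
  rewrite HQ -H2 H1. ring.
have Qpos : Rlt R0 Q.
  have qge : forall l, Rle R0 (omega l - (ln (omega l) + 1))%R.
    move=> l; have := ln_le_sub1 _ (opos l).
    change (Rle (ln (omega l)) (Rminus (omega l) R1) ->
            Rle R0 (Rplus (omega l) (Ropp (Rplus (ln (omega l)) R1)))). lra.
  case: (boolP [forall l, omega l == 1%R]) => [/forallP all1 | /forallPn [l hl]].
  - exfalso; apply: SnI. rewrite SE.
    have -> : diag_mx (\row_i omega i) = 1%:M%R.
      by apply/matrixP => i j; rewrite !mxE (eqP (all1 i)).
    by rewrite mulmx1 (UU' VV).
  - have hq : Rlt R0 (omega l - (ln (omega l) + 1))%R.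
      have hl' : omega l <> 1%R by apply/eqP.
      have := ln_lt_sub1 _ (opos l) hl'.
      change (Rlt (ln (omega l)) (Rminus (omega l) R1) ->
              Rlt R0 (Rplus (omega l) (Ropp (Rplus (ln (omega l)) R1)))). lra.
    rewrite /Q (bigD1 l) //=.
    have := sum_ge0 (P := fun j => j != l) (fun j _ => qge j).
    move: hq; set a := (omega l - _)%R; set s := (\sum_(j | _) _)%R => hq hs.
    change (Rlt R0 (Rplus a s)). lra.
have claim1 : forall i : 'I_p, Rlt (Rplus (ln (omega (rev_ord i))) R1) (r_const omega i).
  by move=> i; rewrite rQ; lra.
have ex : forall i : 'I_p, exists pr : R * R,
    [/\ Rlt R0 pr.1, Rlt pr.1 (/ omega (rev_ord i)), Rlt (/ omega (rev_ord i)) pr.2,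
        gfun (omega (rev_ord i)) pr.1 = r_const omega i &
        gfun (omega (rev_ord i)) pr.2 = r_const omega i].
  move=> i.
  have h1 : Rlt (1 + ln (omega (rev_ord i))) (r_const omega i) by have := claim1 i; lra.
  have [a [b [h2 [h3 [h4 [h5 h6]]]]]] := gfun_two_roots _ _ (opos (rev_ord i)) h1.
  by exists (a, b).
pose pr := fun i => proj1_sig (constructive_indefinite_description _ (ex i)).
have prP : forall i, _ := fun i => proj2_sig (constructive_indefinite_description _ (ex i)).
pose lmin := fun i => (pr i).1.
pose lmax := fun i => (pr i).2.
have chr : forall i : 'I_p,
  Rlt R0 (lmin i) /\ Rlt (lmin i) (lmax i) /\
  (forall l, Rlt R0 l -> (gfun (omega (rev_ord i)) l = r_const omega i <-> l = lmin i \/ l = lmax i)) /\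
  (forall l, Rlt R0 l -> Rlt l (lmin i) \/ Rlt (lmax i) l -> Rlt (r_const omega i) (gfun (omega (rev_ord i)) l)).
  move=> i; case: (prP i) => h1 h2 h3 h4 h5.
  have [c1 c2] := gfun_roots_char _ _ _ _ (opos (rev_ord i)) h1 h2 h3 h4 h5.
  split; first exact: h1. split; first by rewrite /lmin /lmax /pr; lra. by split.
have f1 : fobj S 1%:M%R = (\tr S)%R.
  have : ln (\det (1%:M : 'M[R]_p))%R = R0 by rewrite det1; exact: ln_1.
  rewrite /fobj mulmx1 => ->. by rewrite Ropp_0 Rplus_0_l.
have key : forall (Theta : 'M[R]_p) (lam : 'I_p -> R),
       sym_mx Theta -> posdef Theta -> sorted_eigenvalues Theta lam ->
       (exists i : 'I_p, Rlt (lam i) (lmin i) \/ Rlt (lmax i) (lam i)) ->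
       Rgt (fobj S Theta) (fobj S 1%:M%R).
  move=> Th lam Tsym Tpd [cT ldec] [i hi].
  have [U [UU TE]] := spectral Tsym cT.
  have lpos : forall i, Rlt R0 (lam i) by apply: (spec_pos UU); rewrite -TE.
  have L := fobj_lower VV UU odec ldec lpos. rewrite -SE -TE in L.
  rewrite f1 trS.
  have [_ [_ [_ c4]]] := chr i.
  have G1 := c4 _ (lpos i) hi.
  have G2 : Rle (\sum_(j < p | j != i) Rplus (ln (omega (rev_ord j))) R1)%R
                (\sum_(j < p | j != i) gfun (omega (rev_ord j)) (lam j))%R.
    apply: sum_le => j _. have := gfun_min _ _ (opos (rev_ord j)) (lpos j). lra.
  have G3 : (\sum_j gfun (omega (rev_ord j)) (lam j) = gfun (omega (rev_ord i)) (lam i) +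
            \sum_(j < p | j != i) gfun (omega (rev_ord j)) (lam j))%R by rewrite (bigD1 i).
  move: L G1 G2 G3; rewrite /r_const.
  set A := (\sum_j gfun _ _)%R; set B := (\sum_(j < p | j != i) gfun _ _)%R.
  set C := (\sum_(j < p | j != i) _)%R; set E := (\sum_l omega l)%R.
  set F := fobj S Th; set g := gfun _ (lam i).
  move=> L G1 G2 G3.
  have G3' : A = Rplus g B := G3.
  rewrite /Rgt. lra.
split; first exact: claim1.
exists lmin; exists lmax.
split; first by move=> i; have [h1 [h2 [h3 _]]] := chr i; split; [|split].
split; first exact: key.
split; first exact: f1.
move=> C Th lam Cpd C1 CTh Tmin sTh.
have [Tsym Tpd] := Cpd _ CTh.
have inr : forall i, Rle (lmin i) (lam i) /\ Rle (lam i) (lmax i).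
  move=> i; split; apply: Rnot_lt_le => h.
  - have := key Th lam Tsym Tpd sTh (ex_intro _ i (or_introl h)).
    have := Tmin _ C1. lra.
  - have := key Th lam Tsym Tpd sTh (ex_intro _ i (or_intror h)).
    have := Tmin _ C1. lra.
split; first exact: inr.
case: sTh => cT ldec.
have [U [UU TE]] := spectral Tsym cT.
have lpos : forall i, Rlt R0 (lam i) by apply: (spec_pos UU); rewrite -TE.
have l0 : forall i, (lam i != 0)%R.
  by move=> i; apply/eqP => E; have := lpos i; rewrite E; exact: Rlt_irrefl.
have Finv : frob (invmx Th) = sqrt (\sum_i (lam i)^-1 * (lam i)^-1)%R.
  by rewrite TE (spec_inv UU l0) (frob_spec _ UU).
have F1 := frob_tri S (invmx Th).
have F2 : Rle (sqrt (\sum_i (lam i)^-1 * (lam i)^-1)%R)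
              (sqrt (\sum_(i < p) Rinv (Rmult (lmin i) (lmin i)))%R).
  apply: sqrt_le_1_alt; apply: sum_le => i _.
  have [h1 _] := chr i. have [h2 _] := inr i. have h3 := lpos i.
  change (Rle (Rmult (Rinv (lam i)) (Rinv (lam i))) (Rinv (Rmult (lmin i) (lmin i)))).
  rewrite -Rinv_mult. apply: Rinv_le_contravar.
    exact: Rmult_lt_0_compat.
  nra.
rewrite Finv in F1. apply: (Rle_trans _ _ _ F1); rewrite Rplus_comm; apply: Rplus_le_compat_r; exact: F2.
Qed.
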